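(* If $\mathcal M$ is a uniform oriented matroid with $\operatorname{rank}(\mathcal M)\ge 4$ and $\operatorname{corank}(\mathcal M)\ge 2$, then $\mathcal M$ has a minor isomorphic to the alternating oriented matroid $C^{6,4}$.
   Context: An oriented matroid of rank $d$ on $E$ (given by signed circuits) is uniform if the supports of its circuits are exactly all $(d+1)$-element subsets of $E$; corank is $|E|-\operatorname{rank}$. Minors are obtained by sequences of deletions and contractions of elements. $C^{n,d}$ on $[n]$ has as circuits the signed sets $(I^{odd},I^{even})$ and $(I^{even},I^{odd})$ for $(d+1)$-subsets $I=\{i_1<\dots<i_{d+1}\}$, with $I^{odd}=\{i_1,i_3,\dots\}$, $I^{even}=\{i_2,i_4,\dots\}$. Isomorphism: reorientation of a subset of elements followed by bijective relabeling. *)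

(* Defs.v *)
From HB Require Import structures.
From mathcomp Require Import all_boot.
From Stdlib Require Import Relations.Relation_Operators.
Set Implicit Arguments. Unset Strict Implicit. Unset Printing Implicit Defensive.

Section OM.
Variable E : finType.

Definition sset := ({set E} * {set E})%type.
Definition pos (X : sset) : {set E} := X.1.
Definition neg (X : sset) : {set E} := X.2.
Definition supp (X : sset) : {set E} := X.1 :|: X.2.
Definition sopp (X : sset) : sset := (X.2, X.1).

(* An oriented matroid with ground set S, given by its family C of signed
   circuits (circuit axioms C0-C3, weak elimination). *)
Definition is_OM (S : {set E}) (C : {set sset}) : Prop :=
  [/\ (forall X, X \in C -> [disjoint pos X & neg X] /\ supp X \subset S),
      (forall X, X \in C -> supp X != set0),
      (forall X, X \in C -> sopp X \in C),
      (forall X Y, X \in C -> Y \in C -> supp X \subset supp Y ->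
                   X = Y \/ X = sopp Y) &
      (forall X Y e, X \in C -> Y \in C -> X <> sopp Y ->
         e \in pos X -> e \in neg Y ->
         exists2 Z, Z \in C &
           pos Z \subset (pos X :|: pos Y) :\ e /\
           neg Z \subset (neg X :|: neg Y) :\ e)].

Definition om_indep (S : {set E}) (C : {set sset}) (I : {set E}) : bool :=
  (I \subset S) && [forall X in C, ~~ (supp X \subset I)].

Definition om_rank (S : {set E}) (C : {set sset}) : nat :=
  \max_(I : {set E} | om_indep S C I) #|I|.

Definition om_corank (S : {set E}) (C : {set sset}) : nat :=
  #|S| - om_rank S C.

Definition om_uniform (S : {set E}) (C : {set sset}) : Prop :=
  forall A : {set E}, A \subset S ->
    (A \in [set supp X | X in C]) = (#|A| == (om_rank S C).+1).

Definition OM := ({set E} * {set sset})%type.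

Definition om_delete (M : OM) (e : E) : OM :=
  (M.1 :\ e, [set X in M.2 | e \notin supp X]).

Definition srestr (X : sset) (e : E) : sset := (pos X :\ e, neg X :\ e).

(* Contraction of e: circuits are the support-minimal nonempty elements of
   { X \ e : X circuit }. *)
Definition om_contract (M : OM) (e : E) : OM :=
  (M.1 :\ e,
   [set Z | [exists X in M.2, Z == srestr X e] &&
            (supp Z != set0) &&
            [forall Y in M.2, (supp (srestr Y e) != set0) ==>
                               ~~ (supp (srestr Y e) \proper supp Z)]]).

Definition minor_step (M N : OM) : Prop :=
  exists2 e, e \in M.1 & (N = om_delete M e \/ N = om_contract M e).

Definition is_minor (M N : OM) : Prop := clos_refl_trans OM minor_step M N.

End OM.

Section Alt.
Variable n : nat.
Definition I_odd (I : {set 'I_n}) : {set 'I_n} :=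
  [set i in I | ~~ odd #|[set j in I | j < i]|].
Definition I_even (I : {set 'I_n}) : {set 'I_n} :=
  [set i in I | odd #|[set j in I | j < i]|].
Definition alt_circuits (d : nat) : {set sset 'I_n} :=
  [set X | [exists I : {set 'I_n}, (#|I| == d.+1) &&
            ((X == (I_odd I, I_even I)) || (X == (I_even I, I_odd I)))]].
End Alt.

Definition reorient (T : finType) (R : {set T}) (X : sset T) : sset T :=
  ((pos X :\: R) :|: (neg X :&: R), (neg X :\: R) :|: (pos X :&: R)).

Definition smap (T U : finType) (f : T -> U) (X : sset T) : sset U :=
  (f @: pos X, f @: neg X).

Definition om_iso (E T : finType) (M : OM E) (D : {set sset T}) : Prop :=
  exists (f : T -> E) (R : {set T}),
    [/\ injective f, f @: [set: T] = M.1 &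
        M.2 = [set smap f (reorient R Y) | Y in D]].

(* Main.v *)
Require Import Defs.
From HB Require Import structures.
From mathcomp Require Import all_boot zify.
From Stdlib Require Import Relations.Relation_Operators.
Set Implicit Arguments. Unset Strict Implicit. Unset Printing Implicit Defensive.


Section Inv.
Variable E : finType.
Implicit Types (S A : {set E}) (C : {set sset E}) (X Y Z W : sset E).

Lemma supp_sopp X : supp (sopp X) = supp X.
Proof. by rewrite /supp /sopp setUC. Qed.

Definition Inv S C (r : nat) : Prop :=
  [/\ (forall X, X \in C -> [/\ [disjoint pos X & neg X], supp X \subset S & #|supp X| = r.+1]),
      (forall A, A \subset S -> #|A| = r.+1 -> exists2 X, X \in C & supp X = A),
      (forall X, X \in C -> sopp X \in C),
      (forall X Y, X \in C -> Y \in C -> supp X = supp Y -> X = Y \/ X = sopp Y) &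
      (forall X Y e, X \in C -> Y \in C -> X <> sopp Y ->
         e \in pos X -> e \in neg Y ->
         exists2 Z, Z \in C &
           pos Z \subset (pos X :|: pos Y) :\ e /\
           neg Z \subset (neg X :|: neg Y) :\ e)].

Lemma Inv_of_OM S C : is_OM S C -> om_uniform S C -> Inv S C (om_rank S C).
Proof.
case=> H1 H2 H3 H4 H5 HU; split => //.
- move=> X XC; have [D Sb] := H1 X XC; split => //.
  by apply/eqP; rewrite -HU //; apply/imsetP; exists X.
- move=> A AS cA; move: (HU A AS); rewrite cA eqxx => /imsetP [X XC ->].
  by exists X.
- by move=> X Y XC YC e; apply: H4; rewrite // e.
Qed.

Lemma Inv_delete S C r e : Inv S C r -> e \in S ->
  Inv (om_delete (S, C) e).1 (om_delete (S, C) e).2 r.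
Proof.
case=> H1 H2 H3 H4 H5 eS; rewrite /om_delete /=; split.
- move=> X; rewrite inE => /andP [XC eX]; have [D Sb c] := H1 X XC; split => //.
  apply/subsetP => x xX; rewrite !inE (subsetP Sb) // andbT.
  by apply: contraNneq eX => <-.
- move=> A AS cA; have [X XC eX] := H2 A (subset_trans AS (subD1set _ _)) cA.
  exists X => //; rewrite inE XC eX /=.
  by apply/negP => /(subsetP AS); rewrite !inE eqxx.
- move=> X; rewrite !inE => /andP [XC eX]; rewrite H3 //=.
  by rewrite orbC.
- move=> X Y; rewrite !inE => /andP [XC _] /andP [YC _]; exact: H4.
- move=> X Y f; rewrite !inE => /andP [XC eX] /andP [YC eY] XY fX fY.
  have [Z ZC [Zp Zn]] := H5 X Y f XC YC XY fX fY.
  exists Z => //; rewrite inE ZC /=; apply/negP => /setUP [] eZ.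
  + have := subsetP Zp e eZ; rewrite !inE => /andP [_ /orP []] h.
    * by move: eX; rewrite /supp ?inE /pos /neg in h *; rewrite h.
    * by move: eY; rewrite /supp ?inE /pos /neg in h *; rewrite h.
  + have := subsetP Zn e eZ; rewrite !inE => /andP [_ /orP []] h.
    * by move: eX; rewrite /supp ?inE /pos /neg in h *; rewrite h orbT.
    * by move: eY; rewrite /supp ?inE /pos /neg in h *; rewrite h orbT.
Qed.

End Inv.


Section Contr.
Variable E : finType.
Implicit Types (S A : {set E}) (C : {set sset E}) (X Y Z W : sset E).

Lemma supp_srestr X e : supp (srestr X e) = supp X :\ e.
Proof. by rewrite /supp /srestr /pos /neg /= setDUl. Qed.

Lemma srestr_sopp X e : srestr (sopp X) e = sopp (srestr X e).
Proof. by []. Qed.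

Lemma contract_char S C r e : Inv S C r.+1 -> e \in S -> forall Z,
  Z \in (om_contract (S, C) e).2 <-> exists2 X, X \in C & e \in supp X /\ Z = srestr X e.
Proof.
case=> H1 H2 H3 H4 H5 eS Z; rewrite /om_contract /=; split.
- rewrite inE => /andP [/andP [/existsP [X /andP [XC /eqP ZX]] Z0] /forallP Hm].
  exists X => //; split => //.
  apply/negPn/negP => eX.
  have [_ SX cX] := H1 X XC.
  have [g gX] : exists g, g \in supp X.
    by apply/set0Pn; rewrite -card_gt0 cX.
  have eg : e != g by apply: contraNneq eX => ->.
  have eX' : e \notin supp X :\ g by rewrite inE negb_and eX orbT.
  have AS : e |: (supp X :\ g) \subset S.
    by rewrite subUset sub1set eS (subset_trans (subD1set _ _) SX).
  have cA : #|e |: (supp X :\ g)| = r.+2.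
    by rewrite cardsU1 eX' /=; move: (cardsD1 g (supp X)); rewrite gX cX; lia.
  have [Y YC sY] := H2 _ AS cA.
  have := Hm Y; rewrite YC /= supp_srestr sY ZX supp_srestr.
  have -> : (e |: (supp X :\ g)) :\ e = supp X :\ g.
    apply/setP => x; rewrite !inE; case: eqP => // ->.
    by move: eX; rewrite /supp /pos /neg inE => /negbTE ->; rewrite andbF.
  have -> : supp X :\ e = supp X.
    apply/setP => x; rewrite !inE; case: eqP => // ->.
    by move: eX; rewrite /supp /pos /neg inE => /negbTE ->.
  have -> : supp X :\ g != set0.
    by rewrite -card_gt0; move: (cardsD1 g (supp X)); rewrite gX cX; lia.
  rewrite /= properD1 //.
- case=> X XC [eX ->]; rewrite inE -andbA; apply/and3P; split.
  + by apply/existsP; exists X; rewrite XC eqxx.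
  + have [_ _ cX] := H1 X XC.
    by rewrite supp_srestr -card_gt0; move: (cardsD1 e (supp X)); rewrite eX cX; lia.
  + apply/forallP => Y; apply/implyP => YC; apply/implyP => _.
    apply/negP => /proper_card; rewrite !supp_srestr.
    have [_ _ cX] := H1 X XC; have [_ _ cY] := H1 Y YC.
    move: (cardsD1 e (supp X)) (cardsD1 e (supp Y)); rewrite eX cX cY.
    case: (e \in supp Y) => /=; lia.
Qed.

Lemma Inv_contract S C r e : Inv S C r.+1 -> #|S| = r.+3 -> e \in S ->
  Inv (om_contract (S, C) e).1 (om_contract (S, C) e).2 r.
Proof.
move=> HI cS eS; have HC := contract_char HI eS.
case: HI => H1 H2 H3 H4 H5; rewrite [(om_contract _ _).1]/=; split.
- move=> Z /HC [X XC [eX ->]]; have [D SX cX] := H1 X XC; split.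
  + by apply: disjointWl (subD1set _ _) _; rewrite disjoint_sym;
       apply: disjointWl (subD1set _ _) _; rewrite disjoint_sym.
  + by rewrite supp_srestr setSD.
  + by rewrite supp_srestr; move: (cardsD1 e (supp X)); rewrite eX cX; lia.
- move=> A AS cA.
  have eA : e \notin A by apply/negP => /(subsetP AS); rewrite !inE eqxx.
  have AS' : e |: A \subset S by rewrite subUset sub1set eS (subset_trans AS (subD1set _ _)).
  have cA' : #|e |: A| = r.+2 by rewrite cardsU1 eA cA.
  have [X XC sX] := H2 _ AS' cA'.
  exists (srestr X e).
  + by apply/HC; exists X => //; rewrite sX setU11.
  + rewrite supp_srestr sX; apply/setP => x; rewrite !inE; case: eqP => // ->.
    by rewrite (negbTE eA).
- move=> Z /HC [X XC [eX ->]]; apply/HC; exists (sopp X); first exact: H3.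
  by rewrite supp_sopp.
- move=> Z1 Z2 /HC [X XC [eX ->]] /HC [Y YC [eY ->]]; rewrite !supp_srestr => sXY.
  have : supp X = supp Y by rewrite -(setD1K eX) sXY setD1K.
  move=> sXY'; case: (H4 _ _ XC YC sXY') => ->; [by left|by right].
- move=> Z1 Z2 f /HC [X XC [eX ->]] /HC [Y YC [eY ->]] XY fX fY.
  have XY' : X <> sopp Y by move=> h; apply: XY; rewrite h.
  have fX' : f \in pos X by move: fX; rewrite /srestr /pos /= inE => /andP [].
  have fY' : f \in neg Y by move: fY; rewrite /srestr /neg /= inE => /andP [].
  have ef : f != e by move: fX; rewrite /srestr /pos /= !inE => /andP [-> _].
  have [W WC [Wp Wn]] := H5 X Y f XC YC XY' fX' fY'.
  have [_ SW cW] := H1 W WC.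
  have sW : supp W = S :\ f.
    apply/eqP; rewrite eqEcard cW; move: (cardsD1 f S).
    have -> : f \in S by have [_ SX _] := H1 X XC; apply: (subsetP SX); rewrite /supp inE fX'.
    rewrite cS add1n => -[<-]; rewrite leqnn andbT.
    apply/subsetP => x xW; rewrite !inE (subsetP SW) // andbT.
    apply/negP => /eqP xf; move: xW; rewrite xf /supp inE => /orP [] h.
    * by have := subsetP Wp f h; rewrite !inE eqxx.
    * by have := subsetP Wn f h; rewrite !inE eqxx.
  exists (srestr W e).
  + by apply/HC; exists W => //; rewrite sW !inE eS andbT eq_sym.
  + rewrite /srestr /pos /neg /=; split; apply/subsetP => x; rewrite !inE;
      case/andP => xe xW.
    * by have := subsetP Wp x xW; rewrite !inE xe.
    * by have := subsetP Wn x xW; rewrite !inE xe.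
Qed.
End Contr.


Section Phases.
Variable E : finType.

Lemma delete_phase r k : forall M : OM E, Inv M.1 M.2 r -> #|M.1| = k + r.+2 ->
  exists N : OM E, [/\ is_minor M N, Inv N.1 N.2 r & #|N.1| = r.+2].
Proof.
elim: k => [|k IH] M HI cM.
  by exists M; split => //; apply: rt_refl.
case: M HI cM => S C /= HI cM.
have [e eM] : exists e, e \in S by apply/set0Pn; rewrite -card_gt0 cM.
have HI' := Inv_delete HI eM.
have c' : #|(om_delete (S, C) e).1| = k + r.+2.
  rewrite (cardsD1 e S) eM add1n in cM; rewrite /=; lia.
have [N [mN IN cN]] := IH (om_delete (S, C) e) HI' c'.
exists N; split => //; apply: rt_trans mN; apply: rt_step; exists e => //; by left.
Qed.

Lemma contract_phase k : forall M : OM E, Inv M.1 M.2 (k + 4) -> #|M.1| = k + 6 ->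
  exists N : OM E, [/\ is_minor M N, Inv N.1 N.2 4 & #|N.1| = 6].
Proof.
elim: k => [|k IH] M HI cM.
  by exists M; split => //; apply: rt_refl.
case: M HI cM => S C /= HI cM.
have [e eM] : exists e, e \in S by apply/set0Pn; rewrite -card_gt0 cM.
have cS : #|S| = (k + 4).+3 by rewrite cM; lia.
have HI' := Inv_contract (r := k + 4) HI cS eM.
have c' : #|(om_contract (S, C) e).1| = k + 6.
  rewrite (cardsD1 e S) eM add1n in cM; rewrite /=; lia.
have [N [mN IN cN]] := IH (om_contract (S, C) e) HI' c'.
exists N; split => //; apply: rt_trans mN; apply: rt_step; exists e => //; by right.
Qed.

End Phases.


Lemma card_lt n i : i <= n -> #|[set k : 'I_n | k < i]| = i.
Proof.
move=> h.
have -> : [set k : 'I_n | k < i] = widen_ord h @: [set: 'I_i].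
  apply/setP => k; rewrite inE; apply/idP/imsetP => [ki|[k' _ ->]]; last by rewrite /= ltn_ord.
  by exists (Ordinal ki) => //; apply/val_inj.
have inj : injective (widen_ord h) by move=> a b e; apply/val_inj; exact: (congr1 val e).
by rewrite (card_imset _ inj) cardsT card_ord.
Qed.

Lemma cnt_alt (j i : 'I_6) : #|[set k in [set~ j] | k < i]| = i - (j < i).
Proof.
have -> : [set k in [set~ j] | k < i] = [set k : 'I_6 | k < i] :\ j.
  by apply/setP => k; rewrite !inE andbC.
move: (cardsD1 j [set k : 'I_6 | k < i]); rewrite card_lt ?inE; last exact: ltnW (ltn_ord i).
lia.
Qed.

Lemma alt_odd (j i : 'I_6) : i != j -> (i \in I_odd [set~ j]) = ~~ odd i (+) (j < i).
Proof.
move=> ij; rewrite /I_odd inE !inE ij /= cnt_alt.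
case: (ltnP j i) => h /=; last by rewrite subn0 addbF.
by case: (nat_of_ord i) h => //= n _; rewrite subn1 /= addbT negbK.
Qed.

Lemma alt_even (j i : 'I_6) : i != j -> (i \in I_even [set~ j]) = odd i (+) (j < i).
Proof.
move=> ij; rewrite /I_even inE !inE ij /= cnt_alt.
case: (ltnP j i) => h /=; last by rewrite subn0 addbF.
by case: (nat_of_ord i) h => //= n _; rewrite subn1 /= addbT ?negbK.
Qed.

Lemma alt_j (j : 'I_6) : (j \in I_odd [set~ j]) = false /\ (j \in I_even [set~ j]) = false.
Proof. by rewrite /I_odd /I_even !inE eqxx. Qed.

Lemma alt_mem (Y : sset 'I_6) : Y \in alt_circuits 6 4 <->
  exists j : 'I_6, Y = (I_odd [set~ j], I_even [set~ j]) \/ Y = (I_even [set~ j], I_odd [set~ j]).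
Proof.
rewrite /alt_circuits inE; split.
- case/existsP => I /andP [/eqP cI H].
  have : #|~: I| == 1 by rewrite cardsCs setCK card_ord cI.
  case/cards1P => j hj; have eI : I = [set~ j] by rewrite -hj setCK.
  by exists j; rewrite -eI; case/orP: H => /eqP ->; [left|right].
- case=> j H; apply/existsP; exists [set~ j]; rewrite cardsC1 card_ord eqxx /=.
  by case: H => ->; rewrite eqxx ?orbT.
Qed.


Section Base.
Variables (E : finType) (S : {set E}) (C : {set sset E}).
Hypothesis HI : Inv S C 4.
Hypothesis cS : #|S| = 6.

Lemma sub5 (A : {set E}) : A \subset S -> #|A| = 5 -> exists2 x, x \in S & A = S :\ x.
Proof.
move=> AS cA.
have : #|S :\: A| == 1 by rewrite cardsD (setIidPr AS) cS cA.
case/cards1P => x Hx.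
have xS : x \in S by have := subsetDl S A => /subsetP; apply; rewrite Hx set11.
exists x => //; apply/setP => y; rewrite !inE.
move/setP: Hx => /(_ y); rewrite !inE.
case: (y =P x) => [->|_] /=.
  by rewrite xS andbT; case: (x \in A).
case yS : (y \in S); rewrite ?andbT ?andbF; first by case: (y \in A).
by move=> _; apply/negP => /(subsetP AS); rewrite yS.
Qed.

Definition cx (x : E) : sset E := odflt (set0, set0) [pick X in C | supp X == S :\ x].

Lemma cardS1 x : x \in S -> #|S :\ x| = 5.
Proof. by move=> xS; move: (cardsD1 x S); rewrite xS cS add1n => -[]. Qed.

Lemma cxP x : x \in S -> cx x \in C /\ supp (cx x) = S :\ x.
Proof.
move=> xS; case: HI => _ H2 _ _ _.
have [X XC sX] := H2 _ (subD1set S x) (cardS1 xS).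
rewrite /cx; case: pickP => [Y /andP [YC /eqP]|h] //.
by move: (h X); rewrite XC sX eqxx.
Qed.

Lemma C_char (X : sset E) : X \in C -> exists2 x, x \in S & (X = cx x \/ X = sopp (cx x)).
Proof.
move=> XC; case: (HI) => H1 _ _ H4 _; have [_ SX cX] := H1 X XC.
have [x xS sX] := sub5 SX cX; exists x => //; have [cC sc] := cxP xS.
by apply: H4 => //; rewrite sX sc.
Qed.

Definition s x y := y \in pos (cx x).

Lemma negE x y : x \in S -> y \in S -> y != x -> (y \in neg (cx x)) = ~~ s x y.
Proof.
move=> xS yS yx; have [cC sc] := cxP xS; case: HI => H1 _ _ _ _.
have [D _ _] := H1 _ cC.
have : y \in supp (cx x) by rewrite sc !inE yx.
rewrite /s /supp inE; case/orP => h.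
  by rewrite h (disjointFr D h).
by rewrite h (disjointFl D h).
Qed.

Lemma notin_cx x : x \in S -> (x \in pos (cx x)) = false /\ (x \in neg (cx x)) = false.
Proof.
move=> xS; have [_ sc] := cxP xS.
have : x \notin supp (cx x) by rewrite sc !inE eqxx.
by rewrite /supp inE negb_or => /andP [/negbTE -> /negbTE ->].
Qed.

Definition sc x (b : bool) := if b then cx x else sopp (cx x).

Lemma sc_pos x y b : x \in S -> y \in S -> y != x -> (y \in pos (sc x b)) = (s x y == b).
Proof.
move=> xS yS yx; case: b => /=; first by rewrite eqb_id.
by rewrite /sopp /pos /= -/(neg _) negE //; case: (s x y).
Qed.

Lemma sc_neg x y b : x \in S -> y \in S -> y != x -> (y \in neg (sc x b)) = (s x y != b).
Proof.
move=> xS yS yx; case: b => /=; first by rewrite negE //; case: (s x y).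
by rewrite /sopp /neg /= -/(pos _) -/(s x y); case: (s x y).
Qed.

Lemma sc_C x b : x \in S -> sc x b \in C.
Proof. by move=> xS; have [cC _] := cxP xS; case: b => //=; case: HI => _ _ H3 _ _; apply: H3. Qed.

Lemma supp_sc x b : x \in S -> supp (sc x b) = S :\ x.
Proof. by move=> xS; have [_ sc] := cxP xS; case: b => //=; rewrite supp_sopp. Qed.


Lemma notin_sc x b : x \in S -> (x \in pos (sc x b)) = false /\ (x \in neg (sc x b)) = false.
Proof.
move=> xS; have := supp_sc b xS.
move/setP => /(_ x); rewrite setD11 /supp inE.
by case: (x \in pos _); case: (x \in neg _).
Qed.

Lemma bool_eq (P Q : bool) : (P -> Q) -> (~~ P -> ~~ Q) -> P = Q.
Proof. by case: P; case: Q => // h1 h2; [move: (h1 isT)| move: (h2 isT)]. Qed.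

Lemma elimS a b c : a \in S -> b \in S -> c \in S -> a != b -> a != c -> b != c ->
  exists e3, [/\ (s c a == e3) = (s b a == ~~ s b c), (s c b == e3) = (s a b == s a c) &
    forall g, g \in S -> g != a -> g != b -> g != c ->
      (s a g == s a c) = (s b g == ~~ s b c) -> (s c g == e3) = (s a g == s a c)].
Proof.
move=> aS bS cS' ab ac bc.
set X := sc a (s a c); set Y := sc b (~~ s b c).
have XC : X \in C by apply: sc_C.
have YC : Y \in C by apply: sc_C.
have cX : c \in pos X by rewrite sc_pos // 1?eq_sym.
have cY : c \in neg Y by rewrite sc_neg // 1?eq_sym; case: (s b c).
have XY : X <> sopp Y.
  move=> h; have := congr1 (@supp E) h; rewrite supp_sopp !supp_sc //.
  by move/setP => /(_ b); rewrite !inE eqxx bS /= andbT eq_sym ab.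
case: (HI) => _ _ _ _ H5.
have [W WC [Wp Wn]] := H5 X Y c XC YC XY cX cY.
have [w wS Ww] := C_char WC.
have cW : c \notin supp W.
  rewrite /supp inE; apply/negP => /orP [] h.
  - by have := subsetP Wp c h; rewrite !inE eqxx.
  - by have := subsetP Wn c h; rewrite !inE eqxx.
have wc : w = c.
  have sW : supp W = S :\ w by case: Ww => ->; rewrite ?supp_sopp; have [_ ->] := cxP wS.
  move: cW; rewrite sW !inE cS' andbT negbK => /eqP ->. by [].
subst w.
have [e3 We] : exists e3, W = sc c e3 by case: Ww => ->; [exists true | exists false].
have hp g : g \in S -> g != c -> (s c g == e3) -> g \in pos X \/ g \in pos Y.
  move=> gS gc h; have : g \in pos W by rewrite We sc_pos.
  by move/(subsetP Wp); rewrite !inE => /andP [_ /orP []]; [left|right].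
have hn g : g \in S -> g != c -> ~~ (s c g == e3) -> g \in neg X \/ g \in neg Y.
  move=> gS gc h; have : g \in neg W by rewrite We sc_neg.
  by move/(subsetP Wn); rewrite !inE => /andP [_ /orP []]; [left|right].
have [nXp nXn] := notin_sc (s a c) aS.
have [nYp nYn] := notin_sc (~~ s b c) bS.
exists e3; split.
- apply: bool_eq => h.
  + by case: (hp a aS ac h); rewrite -/X -/Y ?nXp // sc_pos // eq_sym.
  + by case: (hn a aS ac h); rewrite -/X -/Y ?nXn // sc_neg // eq_sym.
- apply: bool_eq => h.
  + by case: (hp b bS bc h); rewrite -/X -/Y ?nYp // sc_pos // eq_sym.
  + by case: (hn b bS bc h); rewrite -/X -/Y ?nYn // sc_neg // eq_sym.
- move=> g gS ga gb gc hab; apply: bool_eq => h.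
  + by case: (hp g gS gc h); rewrite ?sc_pos // -?hab.
  + by case: (hn g gS gc h); rewrite ?sc_neg // -?hab.
Qed.


Lemma bt_anti (syo e3 sxo sxy syx sox soy : bool) :
  (syo == e3) = (sxo == ~~ sxy) -> (syx == e3) = (sox == soy) ->
  syx (+) ~~ sox (+) syo = ~~ (sxy (+) ~~ soy (+) sxo).
Proof. by move: syo e3 sxo sxy syx sox soy; do 7!case. Qed.

Lemma bt_trans (soy e3 sxy sxo syz syo sxz soz : bool) :
  (soy == e3) = (sxy == ~~ sxo) ->
  ((syz == syo) = (sxz == ~~ sxo) -> (soz == e3) = (syz == syo)) ->
  sxy (+) ~~ soy (+) sxo -> syz (+) ~~ soz (+) syo -> sxz (+) ~~ soz (+) sxo.
Proof. move: soy e3 sxy sxo syz syo sxz soz; do 8!case => //=; intuition discriminate. Qed.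

Variable o : E.
Hypothesis oS : o \in S.

Definition t x y := s x y (+) ~~ s o y (+) s x o.
Definition prec x y := (x != y) && ((x == o) || ((y != o) && t x y)).

Lemma t_anti x y : x \in S -> y \in S -> x != o -> y != o -> x != y -> t y x = ~~ t x y.
Proof.
move=> xS yS xo yo xy.
have [e3 [h1 h2 _]] := elimS oS xS yS ltac:(by rewrite eq_sym) ltac:(by rewrite eq_sym) xy.
exact: bt_anti h1 h2.
Qed.

Lemma t_trans x y z : x \in S -> y \in S -> z \in S -> x != o -> y != o -> z != o ->
  x != y -> y != z -> x != z -> t x y -> t y z -> t x z.
Proof.
move=> xS yS zS xo yo zo xy yz xz.
have [e3 [h1 _ h3]] := elimS yS xS oS ltac:(by rewrite eq_sym) yo xo.
apply: bt_trans h1 _; apply: h3 => //; by rewrite eq_sym.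
Qed.

Lemma prec_irr x : prec x x = false.
Proof. by rewrite /prec eqxx. Qed.

Lemma prec_total x y : x \in S -> y \in S -> x != y -> prec x y || prec y x.
Proof.
move=> xS yS xy; rewrite /prec xy [y == x]eq_sym xy /=.
case: (x =P o) => [->|/eqP xo] //=; case: (y =P o) => [->|/eqP yo] //=.
by rewrite (t_anti xS yS) // orbN.
Qed.

Lemma prec_asym x y : x \in S -> y \in S -> prec x y -> prec y x = false.
Proof.
move=> xS yS; rewrite /prec; case/andP => xy H.
rewrite eq_sym xy /=.
case: (x =P o) H => [exo _ | /eqP xo] /=.
  by rewrite orbF -exo eq_sym (negbTE xy).
case/andP => yo txy; rewrite (negbTE yo) /= (t_anti xS yS) ?txy //.
Qed.

Lemma prec_trans x y z : x \in S -> y \in S -> z \in S -> prec x y -> prec y z -> prec x z.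
Proof.
move=> xS yS zS pxy pyz.
have xz : x != z.
  by apply/eqP => exz; move: pyz; rewrite -exz (prec_asym xS yS pxy).
move: pxy pyz; rewrite /prec xz /=.
case: (x =P o) => [//|/eqP xo] /=.
case/andP => xy /andP [yo txy].
case/andP => yz /orP [/eqP yo'|/andP [zo tyz]]; first by rewrite yo' eqxx in yo.
rewrite zo /=; exact: t_trans txy tyz.
Qed.


Definition rk x := #|[set y in S | prec y x]|.

Lemma rk_lt x y : x \in S -> y \in S -> prec x y -> rk x < rk y.
Proof.
move=> xS yS pxy; apply: proper_card; apply/properP; split.
  apply/subsetP => z; rewrite !inE => /andP [zS pzx]; rewrite zS /=.
  exact: prec_trans pzx pxy.
by exists x; rewrite !inE ?xS ?pxy ?prec_irr.
Qed.

Lemma rk_bound x : x \in S -> rk x < 6.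
Proof.
move=> xS; rewrite -ltnS -cS (cardsD1 x S) xS add1n ltnS /rk.
apply: subset_leq_card; apply/subsetP => z; rewrite !inE => /andP [-> pzx].
by rewrite andbT; apply: contraTneq pzx => ->; rewrite prec_irr.
Qed.

Lemma prec_rk x y : x \in S -> y \in S -> prec x y = (rk x < rk y).
Proof.
move=> xS yS; apply: bool_eq => [|h]; first exact: rk_lt.
case: (x =P y) => [->|/eqP xy]; first by rewrite ltnn.
have := prec_total xS yS xy; rewrite (negbTE h) /= => /(rk_lt yS xS).
by rewrite ltnNge => /negP h' ; apply/negP => /ltnW.
Qed.

Lemma rk_inj x y : x \in S -> y \in S -> rk x = rk y -> x = y.
Proof.
move=> xS yS e; apply/eqP/negP => /negP xy.
by have := prec_total xS yS xy; rewrite !prec_rk // e ltnn.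
Qed.

Definition rko x : 'I_6 := inord (rk x).

Lemma rko_val x : x \in S -> val (rko x) = rk x.
Proof. by move=> xS; rewrite /rko /= inordK // rk_bound. Qed.

Lemma rk_surj (i : 'I_6) : exists2 x, x \in S & rk x = i.
Proof.
have inj : {in S &, injective rko}.
  by move=> x y xS yS /(congr1 val); rewrite !rko_val //; apply: rk_inj.
have : [set rko x | x in S] = setT.
  apply/eqP; rewrite eqEcard subsetT /= cardsT card_ord card_in_imset //.
  by rewrite cS.
move/setP => /(_ i); rewrite inE => /imsetP [x xS ->].
by exists x; rewrite ?rko_val.
Qed.

Definition f (i : 'I_6) : E := odflt o [pick x in S | rk x == i].

Lemma fP i : f i \in S /\ rk (f i) = i.
Proof.
rewrite /f; case: pickP => [x /andP [xS /eqP ->]|h] //=.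
have [x xS rx] := rk_surj i; by move: (h x); rewrite xS rx eqxx.
Qed.

Lemma f_inj : injective f.
Proof. move=> i j e; apply/val_inj => /=; by rewrite -(fP i).2 -(fP j).2 e. Qed.

Lemma f_img : [set f i | i in [set: 'I_6]] = S.
Proof.
apply/setP => x; apply/imsetP/idP => [[i _ ->]|xS]; first by case: (fP i).
exists (rko x) => //; apply: rk_inj => //; first by case: (fP (rko x)).
by rewrite (fP _).2 rko_val.
Qed.

Definition rho y := (y != o) && ~~ s o y.
Definition delta x := (x != o) && s x o.

Lemma s_formula x y : x \in S -> y \in S -> x != y -> s x y = prec x y (+) rho y (+) delta x.
Proof.
move=> xS yS xy; rewrite /prec /rho /delta xy /=.
case: (x =P o) => [exo|/eqP xo] /=.
  have yo : y != o by rewrite -exo eq_sym.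
  subst x; rewrite yo /=; by case: (s o y).
case: (y =P o) => [eyo|/eqP yo] /=.
  subst y; by case: (s x o).
rewrite /t; by case: (s x y); case: (s o y); case: (s x o).
Qed.


Definition R := [set i : 'I_6 | rho (f i) (+) ~~ odd i].
Definition Yj (j : 'I_6) : sset 'I_6 := (I_odd [set~ j], I_even [set~ j]).

Lemma sc_negb x b : sc x (~~ b) = sopp (sc x b).
Proof. by case: b => //=; case: (cx x). Qed.

Lemma img_S (D : {set 'I_6}) e : e \in f @: D -> e \in S.
Proof. by case/imsetP => i _ ->; case: (fP i). Qed.

Lemma fj_ex e : e \in S -> exists i, e = f i.
Proof. by rewrite -f_img => /imsetP [i _ ->]; exists i. Qed.

Lemma key j : smap f (reorient R (Yj j)) = sc (f j) (~~ delta (f j)).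
Proof.
have [fjS rj] := fP j.
have sS b e : e \in supp (sc (f j) b) -> e \in S.
  by rewrite supp_sc // => /setD1P [].
rewrite /smap; case E1 : (sc (f j) (~~ delta (f j))) => [P N].
have ePS e : e \in P -> e \in S by move=> h; apply: (sS (~~ delta (f j))); rewrite E1 /supp inE h.
have eNS e : e \in N -> e \in S by move=> h; apply: (sS (~~ delta (f j))); rewrite E1 /supp inE h orbT.
congr (_, _); apply/setP => e.
- case eS : (e \in S); last first.
    by apply/idP/idP => h; [move: (img_S h)|move: (ePS e h)]; rewrite eS.
  have [i ->] := fj_ex eS; rewrite mem_imset; last exact: f_inj.
  have -> : (f i \in P) = (f i \in pos (sc (f j) (~~ delta (f j)))) by rewrite E1.
  have [fiS ri] := fP i.
  case: (i =P j) => [->|/eqP ij].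
    have [-> _] := notin_sc (~~ delta (f j)) fjS; by rewrite /pos /reorient /Yj /= in_setU in_setD in_setI (alt_j j).1 (alt_j j).2 andbF.
  have fij : f i != f j by apply: contra ij => /eqP /f_inj ->.
  rewrite sc_pos // s_formula // 1?eq_sym // prec_rk // ri rj.
  rewrite /pos /reorient /Yj /= in_setU in_setD in_setI alt_odd // alt_even // inE.
  by case: (odd i); case: (j < i); case: (rho (f i)); case: (delta (f j)).
- case eS : (e \in S); last first.
    by apply/idP/idP => h; [move: (img_S h)|move: (eNS e h)]; rewrite eS.
  have [i ->] := fj_ex eS; rewrite mem_imset; last exact: f_inj.
  have -> : (f i \in N) = (f i \in neg (sc (f j) (~~ delta (f j)))) by rewrite E1.
  have [fiS ri] := fP i.
  case: (i =P j) => [->|/eqP ij].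
    by have [_ ->] := notin_sc (~~ delta (f j)) fjS; rewrite /neg /reorient /Yj /= in_setU in_setD in_setI (alt_j j).1 (alt_j j).2 andbF.
  have fij : f i != f j by apply: contra ij => /eqP /f_inj ->.
  rewrite sc_neg // s_formula // 1?eq_sym // prec_rk // ri rj.
  rewrite /neg /reorient /Yj /= in_setU in_setD in_setI alt_odd // alt_even // inE.
  by case: (odd i); case: (j < i); case: (rho (f i)); case: (delta (f j)).
Qed.

Lemma neq_negb (b d : bool) : b != ~~ d -> b = d.
Proof. by case: b; case: d. Qed.

Lemma base_iso : om_iso (S, C) (alt_circuits 6 4).
Proof.
exists f, R; split; [exact: f_inj | exact: f_img |].
apply/setP => X /=; apply/idP/imsetP.
- move=> XC; have [x xS HX] := C_char XC.
  have [j ej] := fj_ex xS; subst x.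
  have [b Xb] : exists b, X = sc (f j) b by case: HX => ->; [exists true | exists false].
  case: (b =P ~~ delta (f j)) => [eb|/eqP nb].
    exists (Yj j); first by apply/alt_mem; exists j; left.
    by rewrite key Xb eb.
  exists (sopp (Yj j)); first by apply/alt_mem; exists j; right.
  have eb : b = ~~ ~~ delta (f j) by rewrite negbK; apply: neq_negb nb.
  by rewrite Xb eb sc_negb -key.
- case=> Y /alt_mem [j [] ->] ->.
    by rewrite key; apply: sc_C; case: (fP j).
  by rewrite -[smap _ _]/(sopp (smap f (reorient R (Yj j)))) key -sc_negb; apply: sc_C; case: (fP j).
Qed.

End Base.


Theorem lemma11p3 (E : finType) (C : {set sset E}) :
  is_OM [set: E] C ->
  om_uniform [set: E] C ->
  4 <= om_rank [set: E] C ->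
  2 <= om_corank [set: E] C ->
  exists N : OM E,
    is_minor (([set: E], C) : OM E) N /\ om_iso N (alt_circuits 6 4).
Proof.
move=> H U r4 k2.
have HI := Inv_of_OM H U.
set r := om_rank [set: E] C in HI r4 k2.
rewrite /om_corank -/r in k2.
have c1 : #|([set: E], C).1| = (#|[set: E]| - r - 2) + r.+2 by rewrite /=; lia.
have [N1 [m1 I1 c1']] := delete_phase (M := ([set: E], C)) HI c1.
have I1' : Inv N1.1 N1.2 ((r - 4) + 4) by rewrite subnK.
have c1'' : #|N1.1| = (r - 4) + 6 by rewrite c1'; lia.
have [N2 [m2 I2 c2]] := contract_phase I1' c1''.
have [o oS] : exists o, o \in N2.1 by apply/set0Pn; rewrite -card_gt0 c2.
exists N2; split; first exact: rt_trans m1 m2.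
case: N2 m2 I2 c2 oS => S2 C2 _ I2 c2 oS.
exact: (@base_iso E S2 C2 I2 c2 o oS).
Qed.
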